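(* Let $G$ be a group, $\Lambda$ an ordered abelian group, $\delta\in\Lambda$, $\delta\geqslant0$, and $l:G\to\Lambda$ a $\delta$-hyperbolic length function. For every $k\in\mathbb{N}$: if $l$ satisfies $(R1,k)$ then it satisfies $(R2,k+1)$; and if $l$ satisfies $(R2,k)$ then it satisfies $(R1,k)$.
   Context: $\Lambda_{\mathbb{Q}}$ is the ordered divisible hull of $\Lambda$, containing $\Lambda$. A length function on $G$ is $l:G\to\Lambda$ with $l(g)\geqslant0$, $l(1)=0$, $l(g)=l(g^{-1})$, $l(gh)\leqslant l(g)+l(h)$. Let $c(g,h)=\tfrac12(l(g)+l(h)-l(g^{-1}h))\in\Lambda_{\mathbb{Q}}$; $l$ is $\delta$-hyperbolic if $c(f,g)\geqslant\min\{c(f,h),c(g,h)\}-\delta$ for all $f,g,h$. For $\alpha\in\Lambda$ and $g,u,g_1\in G$, write $g=u\circ_\alpha g_1$ if $g=ug_1$ and $c(u^{-1},g_1)\leqslant\alpha$. $(R1,k)$: for all $g,h\in G$ there exist $u,g_1,h_1\in G$ with $g=u\circ_{k\delta}g_1$, $h=u\circ_{k\delta}h_1$ and $g^{-1}h=g_1^{-1}\circ_{k\delta}h_1$. $(R2,k)$: for all $g,h\in G$ there exists $u\in G$ with $l(u)\leqslant c(g,h)+k\delta$, $l(u^{-1}g)\leqslant c(g^{-1},g^{-1}h)+k\delta$ and $l(u^{-1}h)\leqslant c(h^{-1},h^{-1}g)+k\delta$. *)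

(* Defs.v *)
From mathcomp Require Import all_boot all_algebra.
Set Implicit Arguments. Unset Strict Implicit. Unset Printing Implicit Defensive.
Import GRing.Theory.
Local Open Scope ring_scope.

Definition is_group (G : Type) (mul : G -> G -> G) (one : G) (inv : G -> G) : Prop :=
  [/\ (forall x y z, mul x (mul y z) = mul (mul x y) z),
      (forall x, mul one x = x), (forall x, mul x one = x),
      (forall x, mul (inv x) x = one) & (forall x, mul x (inv x) = one)].

Definition is_ordered_abelian_group (L : zmodType) (le : rel L) : Prop :=
  [/\ (forall x, le x x),
      (forall x y, le x y -> le y x -> x = y),
      (forall x y z, le x y -> le y z -> le x z),
      (forall x y, le x y || le y x)
    & (forall x y z, le x y -> le (x + z) (y + z))].

Definition omin (L : Type) (le : rel L) (a b : L) : L := if le a b then a else b.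

Section LengthFunctions.
Variables (G : Type) (mul : G -> G -> G) (one : G) (inv : G -> G).
Variables (L : zmodType) (le : rel L).

Definition is_length_function (l : G -> L) : Prop :=
  [/\ (forall g, le 0 (l g)), l one = 0,
      (forall g, l g = l (inv g))
    & (forall g h, le (l (mul g h)) (l g + l h))].

(* c2 l g h = 2 * c(g,h) = l g + l h - l (g^-1 h); this lies in L.
   All statements involving c (which lives in the divisible hull L_Q)
   are multiplied by 2, which is an order isomorphism of L_Q. *)
Definition c2 (l : G -> L) (g h : G) : L := l g + l h - l (mul (inv g) h).

Definition is_hyperbolic (l : G -> L) (delta : L) : Prop :=
  forall f g h, le (omin le (c2 l f h) (c2 l g h) - delta *+ 2) (c2 l f g).

(* g = u o_alpha g1 :  g = u g1  and  c(u^-1, g1) <= alpha  (doubled) *)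
Definition circ_eq (l : G -> L) (alpha : L) (g u g1 : G) : Prop :=
  g = mul u g1 /\ le (c2 l (inv u) g1) (alpha *+ 2).

Definition R1 (l : G -> L) (delta : L) (k : nat) : Prop :=
  forall g h : G, exists u g1 h1 : G,
    [/\ circ_eq l (delta *+ k) g u g1,
        circ_eq l (delta *+ k) h u h1
      & circ_eq l (delta *+ k) (mul (inv g) h) (inv g1) h1].

Definition R2 (l : G -> L) (delta : L) (k : nat) : Prop :=
  forall g h : G, exists u : G,
    [/\ le ((l u) *+ 2) (c2 l g h + (delta *+ k) *+ 2),
        le ((l (mul (inv u) g)) *+ 2)
           (c2 l (inv g) (mul (inv g) h) + (delta *+ k) *+ 2)
      & le ((l (mul (inv u) h)) *+ 2)
           (c2 l (inv h) (mul (inv h) g) + (delta *+ k) *+ 2)].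

End LengthFunctions.

(* Main.v *)
Require Import Defs.
From mathcomp Require Import all_boot all_algebra.
Import GRing.Theory.
Local Open Scope ring_scope.
Set Implicit Arguments. Unset Strict Implicit.

Ltac canc x := do 20?rewrite (addrAC _ x); do 20?rewrite (addrAC _ (-x));
  rewrite ?addrK ?subrK ?subrr ?addr0 ?addrA.
Ltac zmod := apply/eqP; rewrite -subr_eq0; apply/eqP;
  rewrite ?mulr2n ?opprD ?opprK ?addrA -[LHS]add0r;
  repeat match goal with |- context [ - ?x ] => progress canc x end; try reflexivity.

Section OAG.
Variables (L : zmodType) (le : rel L) (HL : is_ordered_abelian_group le).

Lemma le_tr x y z : le x y -> le y z -> le x z.
Proof. by case: HL => _ _ H _ _; apply: H. Qed.

Lemma le_addr x y z : le x y -> le (x + z) (y + z).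
Proof. by case: HL => _ _ _ _ H; apply: H. Qed.

Lemma le_add a b c d : le a b -> le c d -> le (a + c) (b + d).
Proof.
move=> h1 h2; apply: (le_tr (le_addr c h1)).
by rewrite (addrC b) (addrC b); apply: le_addr.
Qed.

Lemma le_comb A B X Y : le A B -> B - A = Y - X -> le X Y.
Proof.
move=> h e; have := le_addr (X - A) h.
have -> : A + (X - A) = X by zmod.
have -> : B + (X - A) = Y by rewrite -(subrK X Y) -e; zmod.
done.
Qed.

Lemma le_half x y : le (x *+ 2) (y *+ 2) -> le x y.
Proof.
move=> h; case: HL => Hr Ha Ht Htot _.
case/orP: (Htot x y) => // hyx.
have h1 : le (y *+ 2) (x + y) by rewrite mulr2n; apply: le_addr.
have h2 : le (x + y) (x *+ 2) by rewrite mulr2n (addrC x); rewrite addrC; apply: le_add.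
have e2 : x *+ 2 = y *+ 2 by apply: Ha => //; apply: le_tr h1 h2.
have : x + y = x *+ 2 by apply: Ha => //; apply: le_tr h (h1).
rewrite mulr2n => /addrI ->; exact: Hr.
Qed.

Lemma le_min X a b : le X a -> le X b -> le X (omin le a b).
Proof. by rewrite /omin; case: (le a b). Qed.

Lemma le_refl x : le x x.
Proof. by case: HL. Qed.
End OAG.

Section Grp.
Variables (G : Type) (mul : G -> G -> G) (one : G) (inv : G -> G).
Hypothesis HG : is_group mul one inv.
Lemma mulA' x y z : mul x (mul y z) = mul (mul x y) z. Proof. by case: HG. Qed.
Lemma mulKg' x y : mul (inv x) (mul x y) = y.
Proof. by case: HG => A l1 _ lV _; rewrite A lV l1. Qed.
Lemma mulVKg' x y : mul x (mul (inv x) y) = y.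
Proof. by case: HG => A l1 _ _ rV; rewrite A rV l1. Qed.
Lemma invK' x : inv (inv x) = x.
Proof.
case: HG => A l1 r1 lV rV.
by rewrite -[inv (inv x)]r1 -(lV x) A lV l1.
Qed.
Lemma invM' x y : inv (mul x y) = mul (inv y) (inv x).
Proof.
case: HG => A l1 r1 lV rV.
have e: mul (mul x y) (mul (inv y) (inv x)) = one by rewrite -A (A y) rV l1 rV.
by rewrite -[inv (mul x y)]r1 -e A lV l1.
Qed.
End Grp.
Section Grp2.
Variables (G : Type) (mul : G -> G -> G) (one : G) (inv : G -> G).
Hypothesis HG : is_group mul one inv.
Lemma mulVg' x : mul (inv x) x = one. Proof. by case: HG. Qed.
Lemma mulgV' x : mul x (inv x) = one. Proof. by case: HG. Qed.
Lemma mulg1' x : mul x one = x. Proof. by case: HG. Qed.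
Lemma mul1g' x : mul one x = x. Proof. by case: HG. Qed.
End Grp2.
Section Hyp.
Variables (L : zmodType) (le : rel L) (HL : is_ordered_abelian_group le).
Lemma le_hyp p q e C X : le (omin le p q - e) C -> le X p -> le X q -> le (X - e) C.
Proof.
move=> h hp hq; apply: (le_tr HL _ h); apply: (le_addr HL).
exact: le_min.
Qed.
End Hyp.
Theorem mainTheorem13
  (G : Type) (mul : G -> G -> G) (one : G) (inv : G -> G)
  (HG : is_group mul one inv)
  (L : zmodType) (le : rel L) (HL : is_ordered_abelian_group le)
  (delta : L) (Hdelta : le 0 delta)
  (l : G -> L) (Hl : is_length_function mul one inv le l)
  (Hhyp : is_hyperbolic mul inv le l delta) :
  forall k : nat,
    (R1 mul inv le l delta k -> R2 mul inv le l delta k.+1) /\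
    (R2 mul inv le l delta k -> R1 mul inv le l delta k).
Proof.
have Hi : forall g, l (inv g) = l g by case: Hl => _ _ H _ g; rewrite -H.
Ltac gn HG Hi := rewrite ?Hi ?(invM' HG) ?(invK' HG) -?(mulA' HG) ?(mulKg' HG) ?(mulVKg' HG) ?(mulVg' HG) ?(mulgV' HG) ?(mulg1' HG) ?(mul1g' HG) ?Hi.
move=> k; split.
- move=> R g h; have [u [g1 [h1 [[Eg H1] [Eh H2] [E3 H3]]]]] := R g h.
  exists u; subst g h; rewrite /c2 in H1 H2 H3 *.
  move: H1 H2 H3; gn HG Hi; move=> H1 H2 H3.
  have hy1 := Hhyp (mul u g1) (mul u h1) u.
  have hy2 := Hhyp (inv (mul u g1)) (mul (inv (mul u g1)) (mul u h1)) (inv g1).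
  have hy3 := Hhyp (inv (mul u h1)) (mul (inv (mul u h1)) (mul u g1)) (inv h1).
  move: hy1 hy2 hy3; rewrite /c2; gn HG Hi; move=> hy1 hy2 hy3.
  have Hsw : l (mul (inv h1) g1) = l (mul (inv g1) h1) by rewrite -Hi (invM' HG) (invK' HG).
  rewrite Hsw in hy3 *.
  rewrite [delta *+ k.+1]mulrS; split.
  + apply: (le_comb HL (le_hyp HL (X := l u *+ 2 - delta *+ k *+ 2) hy1 _ _)); last by zmod.
    * by apply: (le_comb HL H1); zmod.
    * by apply: (le_comb HL H2); zmod.
  + apply: (le_comb HL (le_hyp HL (X := l g1 *+ 2 - delta *+ k *+ 2) hy2 _ _)); last by zmod.
    * by apply: (le_comb HL H1); zmod.
    * by apply: (le_comb HL H3); zmod.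
  + apply: (le_comb HL (le_hyp HL (X := l h1 *+ 2 - delta *+ k *+ 2) hy3 _ _)); last by zmod.
    * by apply: (le_comb HL H2); zmod.
    * by apply: (le_comb HL H3); zmod.
- move=> R g h; have [u [Ha Hb Hc]] := R g h.
  have Hsw : l (mul (inv h) g) = l (mul (inv g) h) by rewrite -Hi (invM' HG) (invK' HG).
  move: Ha Hb Hc; rewrite /c2; gn HG Hi; rewrite Hsw => Ha Hb Hc.
  exists u, (mul (inv u) g), (mul (inv u) h); split; split; rewrite /c2; gn HG Hi => //.
  + apply: (le_half HL); apply: (le_comb HL (le_add HL Ha Hb)); zmod.
  + apply: (le_half HL); apply: (le_comb HL (le_add HL Ha Hc)); zmod.
  + apply: (le_half HL); apply: (le_comb HL (le_add HL Hb Hc)); zmod.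
Qed.
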